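(* Let $a<b$ be real numbers and let $\eta\in\mathcal{C}^{1}[a,b]$ be a real function with $\eta'(a)\neq\eta'(b)$. For parameters $\alpha,\beta,\kappa$ define the modified, dampened function $$\eta^{\alpha}_{\beta,\kappa}(x)=e^{-\alpha x}\bigl(\eta(x)+\beta x+\kappa\bigr),\qquad x\in[a,b].$$ Then for any $\beta\notin\{-\eta'(a),-\eta'(b)\}$, the choices $$\alpha=\frac{1}{b-a}\log\left(\frac{\eta'(b)+\beta}{\eta'(a)+\beta}\right),\qquad \kappa=\frac{e^{-\alpha b}\bigl(\eta(b)+\beta b\bigr)-e^{-\alpha a}\bigl(\eta(a)+\beta a\bigr)}{e^{-\alpha a}-e^{-\alpha b}}$$ solve the system of (nonlinear) equations $$\eta^{\alpha}_{\beta,\kappa}(a)=\eta^{\alpha}_{\beta,\kappa}(b),\qquad \frac{d\eta^{\alpha}_{\beta,\kappa}}{dx}(a)=\frac{d\eta^{\alpha}_{\beta,\kappa}}{dx}(b).$$ In addition, if $\beta>\max\bigl(|\eta'(b)|,|\eta'(a)|\bigr)$, then $\alpha\in\mathbb{R}$ and $\kappa\in\mathbb{R}$.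
   Context: Here $\log$ denotes a (possibly complex) logarithm; when the ratio inside it is not a positive real number, $\alpha$ (and hence $\kappa$) may be complex. *)

(* Defs.v *)
From Stdlib Require Import Reals.
From Coquelicot Require Import Coquelicot.
Open Scope R_scope.

Definition cexp (z : C) : C :=
  (exp (Re z) * cos (Im z), exp (Re z) * sin (Im z)).

(* Derivative of f : R -> V at x relative to the set D (e.g. D = [a,b];
   at an endpoint this is the one-sided derivative):
   lim_{y -> x, y in D, y <> x} (f y - f x) / (y - x) = l. *)
Definition is_derive_on {V : NormedModule R_AbsRing}
  (D : R -> Prop) (f : R -> V) (x : R) (l : V) : Prop :=
  filterlim (fun y => scal (/ (y - x)) (minus (f y) (f x)))
    (within (fun y => D y /\ y <> x) (locally x)) (locally l).

Definition C1_on (a b : R) (eta deta : R -> R) : Prop :=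
  (forall x, a <= x <= b -> is_derive_on (fun y => a <= y <= b) eta x (deta x)) /\
  (forall x, a <= x <= b ->
     filterlim deta (within (fun y => a <= y <= b) (locally x)) (locally (deta x))).

Definition damped (eta : R -> R) (alpha : C) (beta : R) (kappa : C) (x : R) : C :=
  Cmult (cexp (Copp (Cmult alpha (RtoC x)))) (Cplus (RtoC (eta x + beta * x)) kappa).

Definition kappa_of (eta : R -> R) (a b beta : R) (alpha : C) : C :=
  Cdiv (Cminus (Cmult (cexp (Copp (Cmult alpha (RtoC b)))) (RtoC (eta b + beta * b)))
               (Cmult (cexp (Copp (Cmult alpha (RtoC a)))) (RtoC (eta a + beta * a))))
       (Cminus (cexp (Copp (Cmult alpha (RtoC a)))) (cexp (Copp (Cmult alpha (RtoC b))))).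

(* Main.v *)
Require Import Defs.
From Stdlib Require Import Reals Lra Lia Psatz.
From Coquelicot Require Import Coquelicot.
Open Scope R_scope.
Lemma scalC (r : R) (z : C) : scal r z = Cmult (RtoC r) z.
Proof. destruct z as [u v]. apply injective_projections; simpl; unfold scal; simpl; unfold mult; simpl; ring. Qed.
Ltac Rcomp := apply injective_projections; simpl;
  unfold scal, plus, opp, zero, minus; simpl; unfold mult, plus, opp, zero, minus; simpl.


Section Lim.
Context {T : Type} {F : (T -> Prop) -> Prop} {FF : Filter F}.

Lemma lim_fst (u : T -> C) U : filterlim u F (locally U) -> filterlim (fun t => fst (u t)) F (locally (fst U)).
Proof.
  intros H. apply filterlim_locally. intros eps.
  pose proof (proj1 (filterlim_locally _ _) H eps) as B.
  revert B. apply filter_imp. intros t [B _]. exact B.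
Qed.
Lemma lim_snd (u : T -> C) U : filterlim u F (locally U) -> filterlim (fun t => snd (u t)) F (locally (snd U)).
Proof.
  intros H. apply filterlim_locally. intros eps.
  pose proof (proj1 (filterlim_locally _ _) H eps) as B.
  revert B. apply filter_imp. intros t [_ B]. exact B.
Qed.
Lemma lim_pairC (f1 f2 : T -> R) l1 l2 : filterlim f1 F (locally l1) -> filterlim f2 F (locally l2) ->
  filterlim (fun t => (f1 t, f2 t) : C) F (locally ((l1, l2) : C)).
Proof.
  intros H1 H2. apply filterlim_locally. intros eps.
  pose proof (proj1 (filterlim_locally _ _) H1 eps) as B1.
  pose proof (proj1 (filterlim_locally _ _) H2 eps) as B2.
  generalize (filter_and _ _ B1 B2). apply filter_imp.
  intros y [C1 C2]. split; assumption.
Qed.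
Lemma lim_Rmult (f g : T -> R) a b : filterlim f F (locally a) -> filterlim g F (locally b) ->
  filterlim (fun t => f t * g t) F (locally (a * b)).
Proof. intros Hf Hg. exact (filterlim_comp_2 _ _ _ Hf Hg (filterlim_mult a b)). Qed.
Lemma lim_Rplus (f g : T -> R) a b : filterlim f F (locally a) -> filterlim g F (locally b) ->
  filterlim (fun t => f t + g t) F (locally (a + b)).
Proof. intros Hf Hg. exact (filterlim_comp_2 _ _ _ Hf Hg (filterlim_plus a b)). Qed.
Lemma lim_Ropp (f : T -> R) a : filterlim f F (locally a) ->
  filterlim (fun t => - f t) F (locally (- a)).
Proof. intros Hf. eapply filterlim_comp. exact Hf. apply (filterlim_opp a). Qed.
Lemma lim_Rminus (f g : T -> R) a b : filterlim f F (locally a) -> filterlim g F (locally b) ->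
  filterlim (fun t => f t - g t) F (locally (a - b)).
Proof. intros Hf Hg. apply lim_Rplus; auto. apply lim_Ropp; auto. Qed.

Lemma lim_Cmult (u v : T -> C) U V : filterlim u F (locally U) -> filterlim v F (locally V) ->
  filterlim (fun t => Cmult (u t) (v t)) F (locally (Cmult U V)).
Proof.
  intros Hu Hv. pose proof (lim_fst _ _ Hu). pose proof (lim_snd _ _ Hu).
  pose proof (lim_fst _ _ Hv). pose proof (lim_snd _ _ Hv).
  apply lim_pairC. apply lim_Rminus; apply lim_Rmult; auto.
  apply lim_Rplus; apply lim_Rmult; auto.
Qed.
Lemma lim_Cplus (u v : T -> C) U V : filterlim u F (locally U) -> filterlim v F (locally V) ->
  filterlim (fun t => Cplus (u t) (v t)) F (locally (Cplus U V)).
Proof.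
  intros Hu Hv. pose proof (lim_fst _ _ Hu). pose proof (lim_snd _ _ Hu).
  pose proof (lim_fst _ _ Hv). pose proof (lim_snd _ _ Hv).
  apply lim_pairC; apply lim_Rplus; auto.
Qed.
End Lim.

Section L.
Variable D : R -> Prop.
Definition Wf (x : R) := within (fun y => D y /\ y <> x) (locally x).

Lemma ido_ext {V : NormedModule R_AbsRing} (f g : R -> V) x l :
  (forall y, f y = g y) -> is_derive_on D f x l -> is_derive_on D g x l.
Proof.
  intros E H. unfold is_derive_on in *.
  apply filterlim_ext with (2 := H). intros y. rewrite !E. reflexivity.
Qed.

Lemma ido_of_derive (f : R -> R) x l : is_derive f x l -> is_derive_on D f x l.
Proof.
  intros H. apply is_derive_Reals in H.
  unfold is_derive_on. apply filterlim_locally. intros eps.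
  destruct (H eps (cond_pos eps)) as [d Hd].
  exists d. intros y Hy [_ Hyx].
  assert (Hh : y - x <> 0) by lra.
  specialize (Hd (y - x) Hh Hy).
  rewrite Rplus_minus in Hd.
  unfold ball; simpl; unfold AbsRing_ball, abs, minus, plus, opp, scal; simpl.
  unfold mult; simpl.
  assert (E : forall u v w z : R, / u * (v + - w) + - z = (v - w)/u - z)
    by (intros; unfold Rdiv; ring).
  rewrite E. exact Hd.
Qed.

Lemma ido_plus (f g : R -> R) x l m :
  is_derive_on D f x l -> is_derive_on D g x m ->
  is_derive_on D (fun y => f y + g y) x (l + m).
Proof.
  intros Hf Hg. unfold is_derive_on in *.
  eapply filterlim_ext.
  2: exact (filterlim_comp_2 _ _ _ Hf Hg (filterlim_plus l m)).
  intros y. simpl. unfold scal, minus, plus, opp, mult; simpl. unfold mult, plus, opp; simpl. ring.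
Qed.

Lemma ido_pair (f1 f2 : R -> R) x l1 l2 :
  is_derive_on D f1 x l1 -> is_derive_on D f2 x l2 ->
  is_derive_on D (fun y => (f1 y, f2 y) : C) x ((l1, l2) : C).
Proof.
  intros H1 H2. unfold is_derive_on in *.
  apply filterlim_locally. intros eps.
  pose proof (proj1 (filterlim_locally _ _) H1 eps) as B1.
  pose proof (proj1 (filterlim_locally _ _) H2 eps) as B2.
  generalize (filter_and _ _ B1 B2). apply filter_imp.
  intros y [C1 C2]. split; assumption.
Qed.
Lemma lim_id x : filterlim (fun y : R => y - x) (within (fun y => D y /\ y <> x) (locally x)) (locally 0).
Proof.
  eapply filterlim_filter_le_1. apply filter_le_within.
  replace 0 with (x - x) by ring.
  apply (proj1 (continuity_pt_filterlim (fun y => y - x) x)). apply derivable_continuous_pt.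
  apply derivable_pt_minus. apply derivable_pt_id. apply derivable_pt_const.
Qed.

Lemma ido_contC (f : R -> C) x l : is_derive_on D f x l ->
  filterlim f (within (fun y => D y /\ y <> x) (locally x)) (locally (f x)).
Proof.
  intros H. unfold is_derive_on in H.
  assert (E: plus (f x) (scal 0 l) = f x).
  { destruct (f x), l. Rcomp; ring. }
  rewrite <- E.
  apply filterlim_within_ext with
    (f := fun y => plus (f x) (scal (y - x) (scal (/ (y - x)) (minus (f y) (f x))))).
  { intros y [_ Hy]. destruct (f y), (f x). Rcomp; field; lra. }
  eapply (filterlim_comp_2 (fun _ => f x) _ plus).
  apply filterlim_const.
  eapply (filterlim_comp_2 (fun y => y - x) _ scal).
  apply lim_id. exact H. apply (@filterlim_scal R_AbsRing (prod_NormedModule R_AbsRing R_NormedModule R_NormedModule)).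
  apply (@filterlim_plus C_AbsRing C_NormedModule).
Qed.


Lemma ido_Cmult (f g : R -> C) x l m :
  is_derive_on D f x l -> is_derive_on D g x m ->
  is_derive_on D (fun y => Cmult (f y) (g y)) x (Cplus (Cmult l (g x)) (Cmult (f x) m)).
Proof.
  intros Hf Hg. pose proof (ido_contC _ _ _ Hf) as Cf.
  unfold is_derive_on in *.
  apply filterlim_ext with
   (f := fun y => Cplus (Cmult (g x) (scal (/ (y - x)) (minus (f y) (f x))))
                       (Cmult (f y) (scal (/ (y - x)) (minus (g y) (g x))))).
  { intros y. rewrite !scalC. change (@eq C (Cplus (Cmult (g x) (Cmult (RtoC (/(y-x))) (Cminus (f y) (f x)))) (Cmult (f y) (Cmult (RtoC (/(y-x))) (Cminus (g y) (g x))))) (Cmult (RtoC (/(y-x))) (Cminus (Cmult (f y) (g y)) (Cmult (f x) (g x))))). ring. }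
  replace (Cplus (Cmult l (g x)) (Cmult (f x) m)) with (Cplus (Cmult (g x) l) (Cmult (f x) m)) by ring.
  apply lim_Cplus; apply lim_Cmult; auto. apply filterlim_const.
Qed.
End L.

Lemma cexp_add z w : cexp (Cplus z w) = Cmult (cexp z) (cexp w).
Proof.
  destruct z as [z1 z2], w as [w1 w2]. unfold cexp; simpl.
  rewrite exp_plus, cos_plus, sin_plus. apply injective_projections; simpl; ring.
Qed.

Lemma Gform p q y : cexp (Copp (Cmult (p,q) (RtoC y))) = (exp(-(p*y)) * cos(-(q*y)), exp(-(p*y))*sin(-(q*y))).
Proof.
  unfold cexp. simpl.
  replace (p*y - q*0) with (p*y) by ring. replace (p*0+q*y) with (q*y) by ring. reflexivity.
Qed.

Lemma cexp_neq0 z : cexp z <> 0%C.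
Proof.
  destruct z as [z1 z2]. unfold cexp; simpl. intro E.
  pose proof (f_equal fst E) as E1. pose proof (f_equal snd E) as E2. simpl in E1, E2.
  pose proof (exp_pos z1).
  assert (cos z2 = 0). { apply (Rmult_eq_reg_l (exp z1)); [rewrite E1; ring | lra]. }
  assert (sin z2 = 0). { apply (Rmult_eq_reg_l (exp z1)); [rewrite E2; ring | lra]. }
  pose proof (sin2_cos2 z2). rewrite H0, H1 in H2. unfold Rsqr in H2. lra.
Qed.

Lemma Cmult_neq0 (x y : C) : x <> 0%C -> y <> 0%C -> Cmult x y <> 0%C.
Proof.
  intros Hx Hy E. apply Hy.
  replace y with (Cmult (Cinv x) (Cmult x y)) by (field; auto).
  rewrite E. ring.
Qed.

Lemma G_derive D (al : C) x :
  is_derive_on D (fun y => cexp (Copp (Cmult al (RtoC y)))) x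
    (Cmult (Copp al) (cexp (Copp (Cmult al (RtoC x))))).
Proof.
  destruct al as [p q].
  apply ido_ext with (f := fun y => ((exp(-(p*y)) * cos(-(q*y)), exp(-(p*y))*sin(-(q*y))) : C)).
  { intros y. rewrite Gform. reflexivity. }
  rewrite Gform.
  assert (H1 : is_derive (fun y => exp(-(p*y)) * cos(-(q*y))) x
     (-p * (exp(-(p*x)) * cos(-(q*x))) - (-q) * (exp(-(p*x)) * sin(-(q*x))))).
  { auto_derive; [trivial | ring]. }
  assert (H2 : is_derive (fun y => exp(-(p*y)) * sin(-(q*y))) x
     (-p * (exp(-(p*x)) * sin(-(q*x))) + (-q) * (exp(-(p*x)) * cos(-(q*x))))).
  { auto_derive; [trivial | ring]. }
  apply ido_pair; apply ido_of_derive; assumption.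
Qed.

Lemma H_derive D (eta : R -> R) (beta : R) (k : C) x l :
  is_derive_on D eta x l ->
  is_derive_on D (fun y => Cplus (RtoC (eta y + beta * y)) k) x (RtoC (l + beta)).
Proof.
  intros He. destruct k as [k1 k2].
  apply ido_ext with (f := fun y => ((eta y + (beta * y + k1), 0 + k2) : C)).
  { intros y. apply injective_projections; simpl; ring. }
  change (RtoC (l + beta)) with ((l + beta, 0) : C).
  apply ido_pair.
  - apply ido_plus. exact He. apply ido_of_derive. auto_derive; [trivial | ring].
  - apply ido_of_derive. auto_derive; [trivial | ring].
Qed.

Theorem lemma1 (a b : R) (eta deta : R -> R) (beta : R) (L : C) :
  a < b ->
  C1_on a b eta deta ->
  deta a <> deta b ->
  beta <> - deta a -> beta <> - deta b ->
  cexp L = RtoC ((deta b + beta) / (deta a + beta)) ->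
  let alpha := Cdiv L (RtoC (b - a)) in
  let kappa := kappa_of eta a b beta alpha in
  (damped eta alpha beta kappa a = damped eta alpha beta kappa b /\
   exists da db : C,
     is_derive_on (fun y => a <= y <= b) (damped eta alpha beta kappa) a da /\
     is_derive_on (fun y => a <= y <= b) (damped eta alpha beta kappa) b db /\
     da = db) /\
  (beta > Rmax (Rabs (deta b)) (Rabs (deta a)) ->
   - PI < Im L <= PI ->
   Im alpha = 0 /\ Im kappa = 0).
Proof.
  intros Hab [Hder _] Hne Hba Hbb HL alpha kappa.
  assert (Hba' : RtoC (b - a) <> 0%C).
  { intro E. pose proof (f_equal fst E) as E1. simpl in E1. lra. }
  assert (HaL : Cmult alpha (RtoC (b - a)) = L) by (unfold alpha; field; exact Hba').
  set (G := fun x => cexp (Copp (Cmult alpha (RtoC x)))).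
  set (r := (deta b + beta) / (deta a + beta)).
  assert (Hda : deta a + beta <> 0) by lra.
  assert (Hdb : deta b + beta <> 0) by lra.
  assert (HGa : G a = Cmult (G b) (RtoC r)).
  { unfold G. fold r in HL. rewrite <- HL, <- HaL, <- cexp_add. f_equal.
    rewrite RtoC_minus. ring. }
  assert (HGb0 : G b <> 0%C) by apply cexp_neq0.
  assert (Hr1 : Cminus (RtoC r) 1 <> 0%C).
  { intro E. pose proof (f_equal fst E) as E1. simpl in E1.
    apply Hne. unfold r in E1.
    assert (deta b + beta = deta a + beta).
    { apply (Rmult_eq_reg_r (/ (deta a + beta))).
      rewrite Rinv_r by exact Hda. lra. apply Rinv_neq_0_compat; exact Hda. }
    lra. }
  assert (HGab : Cminus (G a) (G b) <> 0%C).
  { rewrite HGa. replace (Cminus (Cmult (G b) (RtoC r)) (G b)) with (Cmult (G b) (Cminus (RtoC r) 1)) by ring.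
    apply Cmult_neq0; assumption. }
  set (H := fun y => Cplus (RtoC (eta y + beta * y)) kappa).
  assert (Heq : Cmult (G a) (H a) = Cmult (G b) (H b)).
  { unfold H, kappa, kappa_of. fold (G a) (G b). field. exact HGab. }
  assert (Hd : forall x, a <= x <= b ->
     is_derive_on (fun y => a <= y <= b) (damped eta alpha beta kappa) x
       (Cplus (Cmult (Cmult (Copp alpha) (G x)) (H x)) (Cmult (G x) (RtoC (deta x + beta))))).
  { intros x Hx. exact (ido_Cmult _ G H x _ _ (G_derive _ alpha x) (H_derive _ eta beta kappa x _ (Hder x Hx))). }
  split; [split|].
  - exact Heq.
  - eexists; eexists; split; [apply Hd; lra|]; split; [apply Hd; lra|].
    assert (X2 : Cmult (G a) (RtoC (deta a + beta)) = Cmult (G b) (RtoC (deta b + beta))).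
    { rewrite HGa, <- Cmult_assoc, <- RtoC_mult. f_equal. f_equal. unfold r. field. exact Hda. }
    replace (Cplus (Cmult (Cmult (Copp alpha) (G a)) (H a)) (Cmult (G a) (RtoC (deta a + beta))))
      with (Cplus (Cmult (Copp alpha) (Cmult (G a) (H a))) (Cmult (G a) (RtoC (deta a + beta)))) by ring.
    rewrite Heq, X2. ring.
  - intros Hbeta HIm.
    assert (Hb1 : Rabs (deta b) < beta) by (pose proof (Rmax_l (Rabs (deta b)) (Rabs (deta a))); lra).
    assert (Ha1 : Rabs (deta a) < beta) by (pose proof (Rmax_r (Rabs (deta b)) (Rabs (deta a))); lra).
    pose proof (Rle_abs (- deta a)) as Ta. pose proof (Rle_abs (- deta b)) as Tb.
    rewrite Rabs_Ropp in Ta, Tb.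
    assert (Hr : r > 0) by (unfold r; apply Rdiv_lt_0_compat; lra).
    fold r in HL.
    destruct L as [L1 L2]. simpl in HIm. unfold cexp in HL. simpl in HL.
    pose proof (f_equal fst HL) as E1. pose proof (f_equal snd HL) as E2. simpl in E1, E2.
    pose proof (exp_pos L1) as Hexp.
    assert (Hs : sin L2 = 0). { apply (Rmult_eq_reg_l (exp L1)); [rewrite E2; ring | lra]. }
    assert (HL2 : L2 = 0).
    { destruct (sin_eq_0_0 _ Hs) as [k Hk].
      assert (Hk1 : (-1 < IZR k)%R).
      { apply (Rmult_lt_reg_r PI). apply PI_RGT_0. lra. }
      assert (Hk2 : (IZR k <= 1)%R).
      { apply (Rmult_le_reg_r PI). apply PI_RGT_0. lra. }
      apply lt_IZR in Hk1. apply le_IZR in Hk2.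
      assert (k = 0%Z \/ k = 1%Z) as [-> | ->] by lia.
      - rewrite Hk. ring.
      - exfalso. rewrite Hk, Rmult_1_l, cos_PI in E1. nra. }
    subst L2.
    assert (HalI : Im alpha = 0).
    { unfold alpha. simpl. unfold Rdiv. ring. }
    split; [exact HalI|].
    assert (Halpha : alpha = (fst alpha, 0)).
    { destruct alpha as [p q]. simpl in HalI. rewrite HalI. reflexivity. }
    unfold kappa, kappa_of. rewrite Halpha, !Gform.
    replace (-(0*b)) with 0 by ring. replace (-(0*a)) with 0 by ring.
    rewrite sin_0. simpl. unfold Rdiv. ring.
Qed.
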